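(* Let $(S,K,I)$ be a split graph, and let $u,v\in I$ be distinct vertices such that $uxv$ is a path in $A_4(S)$ for some $x\in K$. Then there is a path $P$ in $A_4(S)$ between $u$ and $v$ with $V(P)\subseteq I$ and $|V(P)|\le 4$.
   Context: All graphs are finite and simple. A split graph is a graph $S$ whose vertex set is a disjoint union $V(S)=K\,\dot\cup\,I$ with $K$ a clique and $I$ an independent set; $(K,I)$ is called a bipartition of $S$, and $(S,K,I)$ denotes $S$ together with this fixed bipartition. A 2-switch in a graph $G$ is performed on four distinct vertices $a,b,c,d$ with $ab,cd\in E(G)$ and $ac,bd\notin E(G)$: it deletes $ab,cd$ and adds $ac,bd$; $a,b,c,d$ are said to participate in it. $A_4(G)$ is the graph with vertex set $V(G)$ in which distinct $u,v$ are adjacent iff some 2-switch on $G$ has both $u$ and $v$ among its participating vertices. *)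

(* Defs.v *)
From mathcomp Require Import all_boot.
Set Implicit Arguments. Unset Strict Implicit. Unset Printing Implicit Defensive.

Definition simple_graph (T : finType) (e : rel T) : Prop :=
  irreflexive e /\ symmetric e.

Definition split_bipartition (T : finType) (e : rel T) (K I : {set T}) : Prop :=
  [/\ [disjoint K & I], K :|: I = [set: T],
      (forall x y, x \in K -> y \in K -> x != y -> e x y)
    & (forall x y, x \in I -> y \in I -> ~~ e x y)].

Definition two_switch (T : finType) (e : rel T) (a b c d : T) : bool :=
  [&& uniq [:: a; b; c; d], e a b, e c d, ~~ e a c & ~~ e b d].

Definition A4 (T : finType) (e : rel T) : rel T :=
  fun u v => (u != v) &&
    [exists a, exists b, exists c, exists d,
       two_switch e a b c d && (u \in [:: a; b; c; d]) && (v \in [:: a; b; c; d])].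

Definition is_path_between (T : finType) (g : rel T) (u v : T) (p : seq T) : bool :=
  [&& path g u p, last u p == v & uniq (u :: p)].

(* Main.v *)
Require Import Defs.
From mathcomp Require Import all_boot.
Set Implicit Arguments. Unset Strict Implicit. Unset Printing Implicit Defensive.

Definition incb (T : finType) (e : rel T) (p q : T) : bool :=
  [exists y, [exists z, [&& e p y, ~~ e p z, e q z & ~~ e q y]]].

Lemma incP (T : finType) (e : rel T) p q :
  reflect (exists y z, [/\ e p y, ~~ e p z, e q z & ~~ e q y]) (incb e p q).
Proof.
apply: (iffP existsP) => [[y /existsP [z /and4P [? ? ? ?]]]|[y [z [? ? ? ?]]]].
  by exists y, z.
by exists y; apply/existsP; exists z; apply/and4P.
Qed.

Lemma incb_sym (T : finType) (e : rel T) p q : incb e p q -> incb e q p.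
Proof. by move/incP=> [y [z [? ? ? ?]]]; apply/incP; exists z, y. Qed.

Lemma incb_neq (T : finType) (e : rel T) p q : incb e p q -> p != q.
Proof.
move/incP=> [y [z [h1 _ _ h4]]]; apply/eqP => E; subst q.
by rewrite h1 in h4.
Qed.

Lemma comparable (T : finType) (e : rel T) p q : ~~ incb e p q ->
  (forall y, e p y -> e q y) \/ (forall y, e q y -> e p y).
Proof.
move=> H.
case: (boolP [forall y, e p y ==> e q y]) => [/forallP H1|/forallPn [y0]].
  by left => y hy; move: (H1 y); rewrite hy.
rewrite negb_imply => /andP [h1 h2]; right => z hz.
apply/negPn/negP => hz'; apply: (negP H); apply/incP.
by exists y0, z.
Qed.

Lemma main_inc (T : finType) (e : rel T) u v u' v' x :
  incb e u u' -> incb e v v' -> e u x = ~~ e u' x -> e v x = ~~ e v' x ->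
  ~~ incb e u v -> ~~ incb e u' v -> ~~ incb e u v' -> incb e u' v'.
Proof.
move=> /incP [a1 [b1 [ua1 ub1 u'b1 u'a1]]] /incP [a2 [b2 [va2 vb2 v'b2 v'a2]]]
  hx1 hx2 n1 n2 n3.
case: (comparable n1) => [H1|H1].
- have H2 : forall y, e u' y -> e v y.
    case: (comparable n2) => // H; exfalso.
    by move: (H _ (H1 _ ua1)); rewrite (negbTE u'a1).
  have H3 : forall y, e u y -> e v' y.
    case: (comparable n3) => // H; exfalso.
    by move: (H1 _ (H _ v'b2)); rewrite (negbTE vb2).
  have ux : e u x = false.
    apply/negP => ux; move: hx2; rewrite (H1 _ ux) (H3 _ ux) //.
  move: hx1; rewrite ux => /esym/negbFE u'x.
  move: hx2; rewrite (H2 _ u'x) => /esym v'x.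
  apply/incP; exists x, b2; split => //.
  by apply/negP => /H2; rewrite (negbTE vb2).
- have H3 : forall y, e v' y -> e u y.
    case: (comparable n3) => // H; exfalso.
    by move: (H _ (H1 _ va2)); rewrite (negbTE v'a2).
  have H2 : forall y, e v y -> e u' y.
    case: (comparable n2) => // H; exfalso.
    by move: (H1 _ (H _ u'b1)); rewrite (negbTE ub1).
  have vx : e v x = false.
    apply/negP => vx; move: hx1; rewrite (H1 _ vx) (H2 _ vx) //.
  move: hx2; rewrite vx => /esym/negbFE v'x.
  move: hx1; rewrite (H3 _ v'x) => /esym u'x.
  apply/incP; exists b1, x; split => //.
  by apply/negP => /H3; rewrite (negbTE ub1).
Qed.

Lemma in_KI (T : finType) (e : rel T) K I y :
  split_bipartition e K I -> (y \in K) || (y \in I).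
Proof.
move=> [_ HU _ _]; have : y \in K :|: I by rewrite HU inE.
by rewrite inE.
Qed.

Lemma notKI (T : finType) (e : rel T) K I y :
  split_bipartition e K I -> y \in K -> y \in I -> False.
Proof. by move=> [Hd _ _ _] hK; rewrite (disjointFr Hd hK). Qed.

Lemma key_a (T : finType) (e : rel T) (K I : {set T}) a b c d x :
  simple_graph e -> split_bipartition e K I ->
  two_switch e a b c d -> x \in [:: a; b; c; d] -> a \in I -> x \in K ->
  exists u', [/\ u' \in I, incb e a u' & e a x = ~~ e u' x].
Proof.
move=> [irr sym] sb; have sb' := sb; move: sb' => [Hd HU HK HI].
move=> /and5P [un ab cd ac bd] hx aI xK.
move: un; rewrite /= !inE !negb_or => /and4P [/and3P [nab nac nad] /andP [nbc nbd] ncd _].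
have bK : b \in K.
  case/orP: (in_KI b sb) => // bI; by move: (HI _ _ aI bI); rewrite ab.
have dI : d \in I.
  case/orP: (in_KI d sb) => // dK; by move: (HK _ _ bK dK nbd); rewrite (negbTE bd).
have cK : c \in K.
  case/orP: (in_KI c sb) => // cI; by move: (HI _ _ cI dI); rewrite cd.
exists d; split => //.
  by apply/incP; exists b, c; split => //; rewrite sym.
move: hx; rewrite !inE => /or4P [] /eqP E; subst x.
- by case: (notKI sb xK aI).
- by rewrite ab (sym d) bd.
- by rewrite (negbTE ac) (sym d) cd.
- by case: (notKI sb xK dI).
Qed.

Lemma uniq_perm4 (T : eqType) (a b c d : T) :
  uniq [:: a; b; c; d] ->
  [/\ uniq [:: b; a; d; c], uniq [:: c; d; a; b] & uniq [:: d; c; b; a]].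
Proof.
rewrite !cons_uniq !inE !negb_or => /and4P [/and3P [h1 h2 h3] /andP [h4 h5] h6 _].
by split; do !(apply/andP; split); rewrite //; rewrite eq_sym.
Qed.

Lemma key (T : finType) (e : rel T) (K I : {set T}) a b c d u x :
  simple_graph e -> split_bipartition e K I ->
  two_switch e a b c d -> u \in [:: a; b; c; d] -> x \in [:: a; b; c; d] ->
  u \in I -> x \in K ->
  exists u', [/\ u' \in I, incb e u u' & e u x = ~~ e u' x].
Proof.
move=> [irr sym] sb ts hu hx uI xK.
have [un ab cd ac bd] := and5P ts.
have [u1 u2 u3] := uniq_perm4 un.
move: hu; rewrite !inE => /or4P [] /eqP E; subst u.
- exact: (key_a (conj irr sym) sb ts hx uI xK).
- apply: (key_a (conj irr sym) sb (a:=b) (b:=a) (c:=d) (d:=c)) => //.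
    by apply/and5P; split => //; rewrite sym.
  by move: hx; rewrite !inE => /or4P [] ->; rewrite ?orbT.
- apply: (key_a (conj irr sym) sb (a:=c) (b:=d) (c:=a) (d:=b)) => //.
    by apply/and5P; split => //; rewrite sym.
  by move: hx; rewrite !inE => /or4P [] ->; rewrite ?orbT.
- apply: (key_a (conj irr sym) sb (a:=d) (b:=c) (c:=b) (d:=a)) => //.
    by apply/and5P; split => //; rewrite sym.
  by move: hx; rewrite !inE => /or4P [] ->; rewrite ?orbT.
Qed.

Lemma A4_of_incb (T : finType) (e : rel T) (K I : {set T}) p q :
  simple_graph e -> split_bipartition e K I -> p \in I -> q \in I ->
  incb e p q -> A4 e p q.
Proof.
move=> [irr sym] [_ _ _ HI] pI qI hi.
have npq := incb_neq hi.
move/incP: hi => [y [z [py pz qz qy]]].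
rewrite /A4 npq /=; apply/existsP; exists p; apply/existsP; exists y.
apply/existsP; exists z; apply/existsP; exists q.
rewrite !inE !eqxx ?orbT !andbT /two_switch py pz (sym z q) qz (sym y q) qy !andbT.
rewrite !cons_uniq !inE !negb_or npq !andbT /=.
have pny : p != y by apply/eqP => E; rewrite -E irr in py.
have pnz : p != z by apply/eqP => E; move: (HI _ _ qI pI); rewrite E qz.
have ynz : y != z by apply/eqP => E; rewrite E (negbTE pz) in py.
have ynq : y != q by apply/eqP => E; move: (HI _ _ pI qI); rewrite -E py.
have znq : z != q by apply/eqP => E; rewrite E irr in qz.
by rewrite pny pnz ynz ynq znq.
Qed.

Theorem lemma2p2 (T : finType) (e : rel T) (K I : {set T}) (u v x : T) :
  simple_graph e -> split_bipartition e K I ->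
  u \in I -> v \in I -> u != v -> x \in K ->
  is_path_between (A4 e) u v [:: x; v] ->
  exists p : seq T,
    [/\ is_path_between (A4 e) u v p, all (fun w => w \in I) (u :: p)
      & size (u :: p) <= 4].
Proof.
move=> sg sb uI vI nuv xK /and3P [/= /and3P [hux hxv _] _ _].
have [u' [u'I iu hxu]] : exists u', [/\ u' \in I, incb e u u' & e u x = ~~ e u' x].
  move: hux => /andP [_ /existsP [a /existsP [b /existsP [c /existsP [d]]]]].
  move=> /andP [/andP [ts hu] hx].
  exact: (key sg sb ts hu hx uI xK).
have [v' [v'I iv hxv']] : exists v', [/\ v' \in I, incb e v v' & e v x = ~~ e v' x].
  move: hxv => /andP [_ /existsP [a /existsP [b /existsP [c /existsP [d]]]]].
  move=> /andP [/andP [ts hx] hv].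
  exact: (key sg sb ts hv hx vI xK).
have A := A4_of_incb sg sb.
have nuu' := incb_neq iu; have nvv' := incb_neq iv.
case: (boolP (incb e u v)) => [h1|n1].
  exists [:: v]; split => //=.
  - by rewrite /is_path_between /= A // eqxx /= !inE nuv.
  - by rewrite uI vI.
case: (boolP (incb e u' v)) => [h2|n2].
  have nu'v : u' != v by apply: contraNneq n1 => <-.
  exists [:: u'; v]; split => //=.
  - by rewrite /is_path_between /= (A u u') // (A u' v) // eqxx /= !inE !negb_or nuu' nuv nu'v.
  - by rewrite uI u'I vI.
case: (boolP (incb e u v')) => [h3|n3].
  have nuv' : u != v' by apply: contraNneq n1 => ->; apply: incb_sym.
  exists [:: v'; v]; split => //=.
  - by rewrite /is_path_between /= (A u v') // (A v' v) ?(incb_sym iv) // eqxx /= !inE !negb_or nuv' nuv (eq_sym v') nvv'.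
  - by rewrite uI v'I vI.
have h4 := main_inc iu iv hxu hxv' n1 n2 n3.
have nu'v : u' != v by apply: contraNneq n1 => <-.
have nuv' : u != v' by apply: contraNneq n1 => ->; apply: incb_sym.
have nu'v' := incb_neq h4.
exists [:: u'; v'; v]; split => //=.
- rewrite /is_path_between /= (A u u') // (A u' v') // (A v' v) ?(incb_sym iv) // eqxx /= !inE !negb_or.
  by rewrite nuu' nuv' nuv nu'v' nu'v eq_sym nvv'.
- by rewrite uI u'I v'I vI.
Qed.
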